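(* Assume $\tau_1\tau_2\|K\|^2\le1/2$ and $\tau_1\le1/(2L)$, and that $x_0\in[0,1]^n$ and $y_0\in\mathbb R_+^{m_1}\times\mathbb R^{m_2}$. Then for every $N\ge1$, \[\frac1{\tau_1}\sum_{k=1}^N\|x_k-x_{k-1}\|^2+\frac1{\tau_2}\sum_{k=1}^N\|y_k-y_{k-1}\|^2\le4\Delta\Phi_N+\frac8{\tau_1}\sum_{k=1}^N\|x_{k-1}\|^2+16\tau_2\|r\|^2N,\] where $\Delta\Phi_N:=\Phi(x_0,y_0)-\Phi(x_N,y_N)$.
   Context: Let $n,m_1,m_2$ be positive integers, $Q\in\mathbb R^{n\times n}$ symmetric, $c\in\mathbb R^n$, $A\in\mathbb R^{m_1\times n}$, $b\in\mathbb R^{m_1}$, $B\in\mathbb R^{m_2\times n}$, $d\in\mathbb R^{m_2}$. Let $K:=-\begin{pmatrix}A\\ B\end{pmatrix}$ and $r:=(b;d)$. Fix $\rho\ge0$ and let $\mathbf 1$ be the all-ones vector. Define $\hat{\mathcal L}(x,y):=\langle x,Qx\rangle+\langle c,x\rangle+\langle y,Kx+r\rangle+\rho\langle x,\mathbf 1-x\rangle$ (no convexity is assumed), with $\nabla_x\hat{\mathcal L}(x,y)=c+\rho\mathbf 1+K^\top y+2Qx-2\rho x$. Let $Y:=\mathbb R_+^{m_1}\times\mathbb R^{m_2}$, $h_1$ the indicator of $[0,1]^n$, $h_2$ the indicator of $Y$ ($0$ on the set, $+\infty$ outside), $\Phi(x,y):=\hat{\mathcal L}(x,y)+h_1(x)-h_2(y)$.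 $L:=2(\|Q\|+\rho)$, $\|\cdot\|$ the spectral norm on matrices and Euclidean norm on vectors. PDHG iterates with step sizes $\tau_1,\tau_2>0$: $x_{-1}:=x_0$, $\bar x_0:=x_0$, and for $k\ge1$: $y_k=\Pi_Y(y_{k-1}+\tau_2(K\bar x_{k-1}+r))$, $x_k=\Pi_{[0,1]^n}(x_{k-1}-\tau_1\nabla_x\hat{\mathcal L}(x_{k-1},y_k))$, $\bar x_k=2x_k-x_{k-1}$, with $\Pi$ the Euclidean projection. *)

(* Defs.v *)
From HB Require Import structures.
From mathcomp Require Import all_boot all_order all_algebra.
From mathcomp Require Import all_classical all_reals.
From mathcomp Require Import ereal.
Set Implicit Arguments. Unset Strict Implicit. Unset Printing Implicit Defensive.
Import Order.TTheory GRing.Theory Num.Theory.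
Local Open Scope ring_scope.

Section PDHG.
Variable R : realType.

Definition vdot {n} (u v : 'cV[R]_n) : R := \sum_i u i 0 * v i 0.
Definition vnorm {n} (u : 'cV[R]_n) : R := Num.sqrt (vdot u u).

Definition specnorm {m n} (M : 'M[R]_(m, n)) : R :=
  sup [set vnorm (M *m x) | x in [set x : 'cV[R]_n | vnorm x <= 1]]%classic.

Definition ones n : 'cV[R]_n := const_mx 1.

Definition Kmat {n m1 m2} (A : 'M[R]_(m1, n)) (B : 'M[R]_(m2, n))
  : 'M[R]_(m1 + m2, n) := - col_mx A B.
Definition rvec {m1 m2} (b : 'cV[R]_m1) (d : 'cV[R]_m2) : 'cV[R]_(m1 + m2) :=
  col_mx b d.

Definition in_box {n} (x : 'cV[R]_n) : Prop := forall i, 0 <= x i 0 <= 1.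
Definition in_Y {m1 m2} (y : 'cV[R]_(m1 + m2)) : Prop :=
  forall i : 'I_m1, 0 <= y (lshift m2 i) 0.

Definition proj_box {n} (x : 'cV[R]_n) : 'cV[R]_n :=
  \col_i Num.min 1 (Num.max 0 (x i 0)).
Definition proj_Y {m1 m2} (y : 'cV[R]_(m1 + m2)) : 'cV[R]_(m1 + m2) :=
  col_mx (\col_i Num.max 0 (usubmx y i 0)) (dsubmx y).

Variables (n m1 m2 : nat) (Q : 'M[R]_n) (c : 'cV[R]_n)
  (A : 'M[R]_(m1, n)) (b : 'cV[R]_m1) (B : 'M[R]_(m2, n)) (d : 'cV[R]_m2)
  (rho : R).

Let K := Kmat A B.
Let r := rvec b d.

Definition Lhat (x : 'cV[R]_n) (y : 'cV[R]_(m1 + m2)) : R :=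
  vdot x (Q *m x) + vdot c x + vdot y (K *m x + r) + rho * vdot x (ones n - x).

Definition gradx_Lhat (x : 'cV[R]_n) (y : 'cV[R]_(m1 + m2)) : 'cV[R]_n :=
  c + rho *: ones n + K^T *m y + 2%:R *: (Q *m x) - (2%:R * rho) *: x.

Definition h1 (x : 'cV[R]_n) : \bar R := if `[< in_box x >] then 0%E else +oo%E.
Definition h2 (y : 'cV[R]_(m1 + m2)) : \bar R :=
  if `[< in_Y y >] then 0%E else +oo%E.

Definition Phi (x : 'cV[R]_n) (y : 'cV[R]_(m1 + m2)) : \bar R :=
  ((Lhat x y)%:E + h1 x - h2 y)%E.

(* PDHG: state after step k is (x_k, y_k, x_{k-1}); xbar_k = 2 x_k - x_{k-1} *)
Fixpoint pdhg (tau1 tau2 : R) (x0 : 'cV[R]_n) (y0 : 'cV[R]_(m1 + m2)) (k : nat)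
  : 'cV[R]_n * 'cV[R]_(m1 + m2) * 'cV[R]_n :=
  match k with
  | 0 => (x0, y0, x0)
  | k'.+1 =>
      let: (xp, yp, xpp) := pdhg tau1 tau2 x0 y0 k' in
      let xbar := 2%:R *: xp - xpp in
      let yk := proj_Y (yp + tau2 *: (K *m xbar + r)) in
      let xk := proj_box (xp - tau1 *: gradx_Lhat xp yk) in
      (xk, yk, xp)
  end.

Definition xit tau1 tau2 x0 y0 k := (pdhg tau1 tau2 x0 y0 k).1.1.
Definition yit tau1 tau2 x0 y0 k := (pdhg tau1 tau2 x0 y0 k).1.2.

End PDHG.

(* Main.v *)
Require Import Defs.
From HB Require Import structures.
From mathcomp Require Import all_boot all_order all_algebra.
From mathcomp Require Import all_classical all_reals.
From mathcomp Require Import ereal.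
From mathcomp Require Import ring lra.
Import Order.TTheory GRing.Theory Num.Theory.
Set Implicit Arguments. Unset Strict Implicit.
Local Open Scope ring_scope.


Lemma vdotC (R : realType) n (u v : 'cV[R]_n) : vdot u v = vdot v u.
Proof. by apply: eq_bigr => i _; rewrite mulrC. Qed.

Lemma vdotDl (R : realType) n (u v w : 'cV[R]_n) : vdot (u + v) w = vdot u w + vdot v w.
Proof. by rewrite /vdot -big_split; apply: eq_bigr => i _; rewrite mxE mulrDl. Qed.

Lemma vdotDr (R : realType) n (u v w : 'cV[R]_n) : vdot w (u + v) = vdot w u + vdot w v.
Proof. by rewrite vdotC vdotDl !(vdotC w). Qed.

Lemma vdotZl (R : realType) n a (u w : 'cV[R]_n) : vdot (a *: u) w = a * vdot u w.
Proof. by rewrite /vdot mulr_sumr; apply: eq_bigr => i _; rewrite mxE mulrA. Qed.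

Lemma vdotZr (R : realType) n a (u w : 'cV[R]_n) : vdot w (a *: u) = a * vdot w u.
Proof. by rewrite vdotC vdotZl vdotC. Qed.

Lemma vdotNl (R : realType) n (u w : 'cV[R]_n) : vdot (- u) w = - vdot u w.
Proof. by rewrite -scaleN1r vdotZl mulN1r. Qed.

Lemma vdotNr (R : realType) n (u w : 'cV[R]_n) : vdot w (- u) = - vdot w u.
Proof. by rewrite vdotC vdotNl vdotC. Qed.

Lemma vdot_ge0 (R : realType) n (u : 'cV[R]_n) : 0 <= vdot u u.
Proof. by apply: sumr_ge0 => i _; rewrite -expr2 sqr_ge0. Qed.

Lemma vnorm2 (R : realType) n (u : 'cV[R]_n) : vnorm u ^+ 2 = vdot u u.
Proof. by rewrite /vnorm sqr_sqrtr // vdot_ge0. Qed.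

Lemma vdot_mul (R : realType) m n (M : 'M[R]_(m, n)) u v :
  vdot u (M *m v) = vdot (M^T *m u) v.
Proof.
rewrite /vdot.
under eq_bigr do rewrite mxE big_distrr.
rewrite exchange_big /=; apply: eq_bigr => j _.
rewrite mxE big_distrl /=; apply: eq_bigr => i _.
by rewrite mxE mulrCA mulrA.
Qed.


Lemma coord_le (R : realType) n (x : 'cV[R]_n) i : x i 0 ^+ 2 <= vdot x x.
Proof.
rewrite /vdot (bigD1 i) //= -expr2 lerDl.
by apply: sumr_ge0 => j _; rewrite -expr2 sqr_ge0.
Qed.

Lemma vnorm_ge0 (R : realType) n (x : 'cV[R]_n) : 0 <= vnorm x.
Proof. exact: sqrtr_ge0. Qed.

Lemma vnorm_bound (R : realType) m n (M : 'M[R]_(m, n)) (x : 'cV[R]_n) :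
  vnorm x <= 1 ->
  vnorm (M *m x) <= Num.sqrt (\sum_i (\sum_j `|M i j|) ^+ 2).
Proof.
move=> hx.
have hxx : vdot x x <= 1.
  have := vnorm_ge0 x; rewrite -vnorm2 => h0; nra.
have hc : forall j, `|x j 0| <= 1.
  move=> j; have := coord_le x j; rewrite ler_norml => h.
  apply/andP; split; nra.
rewrite /vnorm ler_sqrt; last by apply: sumr_ge0 => i _; rewrite sqr_ge0.
apply: ler_sum => i _; rewrite -expr2 mxE.
have h1 : `|\sum_j M i j * x j 0| <= \sum_j `|M i j|.
  apply: le_trans (ler_norm_sum _ _ _) _.
  apply: ler_sum => j _; rewrite normrM.
  by rewrite -[leRHS]mulr1 ler_wpM2l.
rewrite -real_normK ?num_real //.
by rewrite lerXn2r // ?nnegrE // ?normr_ge0 // (le_trans (normr_ge0 _) h1).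
Qed.

Lemma vnormZ (R : realType) n a (x : 'cV[R]_n) : vnorm (a *: x) = `|a| * vnorm x.
Proof.
by rewrite /vnorm vdotZl vdotZr mulrA -expr2 sqrtrM ?sqr_ge0 // sqrtr_sqr.
Qed.

Lemma specnorm_ge (R : realType) m n (M : 'M[R]_(m, n)) (x : 'cV[R]_n) :
  vnorm (M *m x) <= specnorm M * vnorm x.
Proof.
pose E := [set vnorm (M *m x) | x in [set x : 'cV[R]_n | vnorm x <= 1]]%classic.
have hs : has_sup E.
  split; first by exists (vnorm (M *m 0)); exists 0 => //=; rewrite /vnorm /vdot big1 ?sqrtr0 // => i _; rewrite mxE mul0r.
  exists (Num.sqrt (\sum_i (\sum_j `|M i j|) ^+ 2)) => a [y hy <-].
  exact: vnorm_bound.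
have key : forall y, vnorm y <= 1 -> vnorm (M *m y) <= specnorm M.
  by move=> y hy; apply: (sup_upper_bound hs); exists y.
have [h0|hpos] := eqVneq (vnorm x) 0.
  have hx : x = 0.
    have hv : vdot x x = 0.
      by rewrite -vnorm2; apply/eqP; rewrite sqrf_eq0; apply/eqP.
    apply/matrixP => i j; rewrite (ord1 j) mxE.
    have : x i 0 * x i 0 = 0.
      by apply: (psumr_eq0P _ hv) => // k _; rewrite -expr2 sqr_ge0.
    by move/eqP; rewrite mulf_eq0 orbb => /eqP.
  rewrite (_ : vnorm x = 0) ?mulr0; last exact: h0.
  by rewrite hx mulmx0 /vnorm /vdot big1 ?sqrtr0 // => i _; rewrite mxE mul0r.
have hp : 0 < vnorm x by rewrite lt_def hpos vnorm_ge0.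
have := key ((vnorm x)^-1 *: x).
rewrite vnormZ ger0_norm ?invr_ge0 ?vnorm_ge0 // mulVf // lexx => /(_ isT).
rewrite -scalemxAr vnormZ ger0_norm ?invr_ge0 ?vnorm_ge0 //.
by rewrite ler_pdivrMl // mulrC.
Qed.

Lemma specnorm_sq (R : realType) m n (M : 'M[R]_(m, n)) (x : 'cV[R]_n) :
  vdot (M *m x) (M *m x) <= specnorm M ^+ 2 * vdot x x.
Proof.
rewrite -!vnorm2 -exprMn.
have := specnorm_ge M x; have := vnorm_ge0 (M *m x); move=> h1 h2.
by rewrite lerXn2r // nnegrE // (le_trans h1 h2).
Qed.

Lemma specnorm_ge0 (R : realType) m n (M : 'M[R]_(m, n)) : 0 <= specnorm M.
Proof.
pose E := [set vnorm (M *m x) | x in [set x : 'cV[R]_n | vnorm x <= 1]]%classic.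
have hs : has_sup E.
  split; first by exists (vnorm (M *m 0)); exists 0 => //=; rewrite /vnorm /vdot big1 ?sqrtr0 // => i _; rewrite mxE mul0r.
  exists (Num.sqrt (\sum_i (\sum_j `|M i j|) ^+ 2)) => a [y hy <-].
  exact: vnorm_bound.
have h0 : vnorm (M *m 0) = 0.
  by rewrite mulmx0 /vnorm /vdot big1 ?sqrtr0 // => i _; rewrite mxE mul0r.
rewrite -h0; apply: (sup_upper_bound hs); exists 0 => //=.
by rewrite /vnorm /vdot big1 ?sqrtr0 // => i _; rewrite mxE mul0r.
Qed.


Lemma proj_box_in (R : realType) n (v : 'cV[R]_n) : in_box (proj_box v).
Proof.
move=> i; rewrite mxE; apply/andP; split.
  by rewrite le_min ler01 le_max lexx.
by rewrite ge_min lexx.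
Qed.

Lemma proj_box_ineq (R : realType) n (v z : 'cV[R]_n) : in_box z ->
  vdot (proj_box v - z) (proj_box v - z) <= vdot (v - z) (proj_box v - z).
Proof.
move=> hz; apply: ler_sum => i _; rewrite !mxE.
have /andP[] := hz i.
move: (v i 0) (z i 0) => vi zi z0 z1.
have [h|h] := leP vi 0.
  rewrite (min_r ler01). nra.
have [h2|h2] := leP vi 1.
  by [].
nra.
Qed.

Lemma proj_Y_in (R : realType) m1 m2 (v : 'cV[R]_(m1 + m2)) : in_Y (proj_Y v).
Proof. by move=> i; rewrite mxE (unsplitK (inl i) : fintype.split (lshift m2 i) = inl i) /= mxE le_max lexx. Qed.

Lemma proj_Y_ineq (R : realType) m1 m2 (v z : 'cV[R]_(m1 + m2)) : in_Y z ->
  vdot (proj_Y v - z) (proj_Y v - z) <= vdot (v - z) (proj_Y v - z).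
Proof.
move=> hz; rewrite /vdot !big_split_ord /=; apply: lerD; apply: ler_sum => i _.
  rewrite !mxE (unsplitK (inl i) : fintype.split (lshift m2 i) = inl i) /= !mxE.
  have := hz i.
  move: (v _ 0) (z _ 0) => vi zi z0.
  have [h|h] := leP vi 0.
    nra.
  by [].
by rewrite !mxE (unsplitK (inr i) : fintype.split (rshift m1 i) = inr i) /= !mxE.
Qed.


Lemma Lhat_x (R : realType) n m1 m2 (Q : 'M[R]_n) c A b B d rho (x h : 'cV[R]_n)
  (y : 'cV[R]_(m1 + m2)) : Q^T = Q ->
  Lhat Q c A b B d rho (x + h) y - Lhat Q c A b B d rho x y =
  vdot (gradx_Lhat Q c A B rho x y) h + vdot h (Q *m h) - rho * vdot h h.
Proof.
move=> hQ; rewrite /Lhat /gradx_Lhat.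
rewrite !(mulmxDr, vdotDl, vdotDr, vdotNl, vdotNr, vdotZl, vdotZr).
have e1 : vdot x (Q *m h) = vdot (Q *m x) h by rewrite vdot_mul hQ.
have e2 : vdot h (Q *m x) = vdot (Q *m x) h by rewrite vdotC.
have e3 : vdot y (Kmat A B *m h) = vdot ((Kmat A B)^T *m y) h by rewrite vdot_mul.
have e4 : vdot h x = vdot x h by rewrite vdotC.
have e5 : vdot (@ones R n) h = vdot h (@ones R n) by rewrite vdotC.
rewrite e1 e2 e3 e4 e5; ring.
Qed.

Lemma Lhat_y (R : realType) n m1 m2 (Q : 'M[R]_n) c A b B d rho (x : 'cV[R]_n)
  (y e : 'cV[R]_(m1 + m2)) :
  Lhat Q c A b B d rho x (y + e) - Lhat Q c A b B d rho x y =
  vdot e (Kmat A B *m x + rvec b d).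
Proof. rewrite /Lhat vdotDl; ring. Qed.

Lemma quad_bound (R : realType) n (Q : 'M[R]_n) (D : R) (h : 'cV[R]_n) :
  specnorm Q <= D -> vdot h (Q *m h) <= D * vdot h h.
Proof.
move=> hD.
have S0 := specnorm_ge0 Q.
have hq := specnorm_sq Q h.
have hh := vdot_ge0 h.
have [D0|Dp] := eqVneq D 0.
  have S00 : specnorm Q = 0 by apply/eqP; rewrite eq_le S0 andbT; rewrite -D0.
  rewrite S00 expr0n /= mul0r in hq.
  have qq := vdot_ge0 (Q *m h).
  have e : vdot (Q *m h) (Q *m h) = 0 by apply/eqP; rewrite eq_le hq qq.
  have hz : Q *m h = 0.
    apply/matrixP => i j; rewrite (ord1 j) [RHS]mxE.
    have : (Q *m h) i 0 * (Q *m h) i 0 = 0.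
      by apply: (psumr_eq0P _ e) => // k _; rewrite -expr2 sqr_ge0.
    by move/eqP; rewrite mulf_eq0 orbb => /eqP.
  by rewrite hz D0 mul0r /vdot big1 // => i _; rewrite mxE mulr0.
have Dpos : 0 < D by rewrite lt_def Dp (le_trans S0 hD).
have sos := vdot_ge0 (D *: h - Q *m h).
rewrite !(vdotDl, vdotDr, vdotNl, vdotNr, vdotZl, vdotZr) in sos.
have e1 : vdot (Q *m h) h = vdot h (Q *m h) by rewrite vdotC.
rewrite e1 in sos.
have hS2 : specnorm Q ^+ 2 <= D ^+ 2 by rewrite lerXn2r // nnegrE (le_trans S0 hD).
have f1 : specnorm Q ^+ 2 * vdot h h <= D ^+ 2 * vdot h h by rewrite ler_wpM2r.
rewrite -(ler_pM2l Dpos); nra.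
Qed.


Lemma pdhg_prev (R : realType) n m1 m2 (Q : 'M[R]_n) c A b B d rho t1 t2 x0
  (y0 : 'cV[R]_(m1 + m2)) k :
  (pdhg Q c A b B d rho t1 t2 x0 y0 k).2 = xit Q c A b B d rho t1 t2 x0 y0 k.-1.
Proof.
case: k => [|k] //=; rewrite /xit /=.
by case: (pdhg Q c A b B d rho t1 t2 x0 y0 k) => [[xp yp] xpp].
Qed.

Lemma pdhg_rec (R : realType) n m1 m2 (Q : 'M[R]_n) c A b B d rho t1 t2 x0
  (y0 : 'cV[R]_(m1 + m2)) k :
  let X := xit Q c A b B d rho t1 t2 x0 y0 in
  let Y := yit Q c A b B d rho t1 t2 x0 y0 in
  Y k.+1 = proj_Y (Y k + t2 *: (Kmat A B *m (2%:R *: X k - X k.-1) + rvec b d)) /\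
  X k.+1 = proj_box (X k - t1 *: gradx_Lhat Q c A B rho (X k) (Y k.+1)).
Proof.
move=> X Y; rewrite /X /Y -pdhg_prev /xit /yit /=.
by case: (pdhg Q c A b B d rho t1 t2 x0 y0 k) => [[xp yp] xpp].
Qed.

Lemma subr_ge0R (R : realType) (a b : R) : a <= b -> 0 <= b - a.
Proof. by rewrite subr_ge0. Qed.

Lemma zg (V : zmodType) (a b r : V) : a + a - b + r = a + r + (a - b).
Proof. by rewrite -(addrA a a) addrAC. Qed.

Lemma vdot_sum_le (R : realType) n (u v : 'cV[R]_n) :
  vdot (u + v) (u + v) <= 2%:R * vdot u u + 2%:R * vdot v v.
Proof.
have := vdot_ge0 (u - v).
rewrite !(vdotDl, vdotDr, vdotNl, vdotNr) (vdotC v u); lra.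
Qed.

Lemma step_ineq (R : realType) (n m1 m2 : nat) (Q : 'M[R]_n) (c : 'cV[R]_n)
  (A : 'M[R]_(m1, n)) (b : 'cV[R]_m1) (B : 'M[R]_(m2, n)) (d : 'cV[R]_m2)
  (rho tau1 tau2 : R) (x0 : 'cV[R]_n) (y0 : 'cV[R]_(m1 + m2)) :
  Q^T = Q -> 0 <= rho -> 0 < tau1 -> 0 < tau2 ->
  tau1 * tau2 * specnorm (Kmat A B) ^+ 2 <= 1 / 2%:R ->
  tau1 <= 1 / (2%:R * (2%:R * (specnorm Q + rho))) ->
  in_box x0 -> in_Y y0 ->
  forall k : nat,
  let X := xit Q c A b B d rho tau1 tau2 x0 y0 in
  let Y := yit Q c A b B d rho tau1 tau2 x0 y0 in
  let L j := Lhat Q c A b B d rho (X j) (Y j) in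
  tau1^-1 * vdot (X k.+1 - X k) (X k.+1 - X k) + tau2^-1 * vdot (Y k.+1 - Y k) (Y k.+1 - Y k)
  <= 4%:R * (L k - L k.+1) + 8%:R * tau1^-1 * vdot (X k) (X k)
     + 16%:R * tau2 * vdot (rvec b d) (rvec b d)
     + 2%:R * tau1^-1 * (vdot (X k - X k.-1) (X k - X k.-1) - vdot (X k.+1 - X k) (X k.+1 - X k)).
Proof.
move=> hQ hrho t1p t2p hK ht hx0 hy0 k; cbv zeta.
set X := xit Q c A b B d rho tau1 tau2 x0 y0.
set Y := yit Q c A b B d rho tau1 tau2 x0 y0.
have inX : forall j, in_box (X j).
  case=> [|j]; first exact: hx0.
  have /= [_ ee] := pdhg_rec Q c A b B d rho tau1 tau2 x0 y0 j; rewrite /X ee; exact: proj_box_in.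
have inY : forall j, in_Y (Y j).
  case=> [|j]; first exact: hy0.
  have /= [ee _] := pdhg_rec Q c A b B d rho tau1 tau2 x0 y0 j; rewrite /Y ee; exact: proj_Y_in.
have /= [eY eX] := pdhg_rec Q c A b B d rho tau1 tau2 x0 y0 k.
rewrite -/X -/Y in eY eX.
move: eY eX (inX k) (inY k).
move: (X k.+1) (X k) (X k.-1) (Y k.+1) (Y k) => x1 xk xp y1 yk eY eX ixk iyk.
set K := Kmat A B; set r := rvec b d.
set g := gradx_Lhat Q c A B rho xk y1.
set w := K *m xk + r; set z := K *m (xk - xp).
have P1 := proj_box_ineq (xk - tau1 *: g) ixk.
rewrite -eX (_ : xk - tau1 *: g - xk = - (tau1 *: g)) ?vdotNl ?vdotZl in P1; last first.
  by rewrite addrAC subrr add0r.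
have P2 := proj_Y_ineq (yk + tau2 *: (K *m (2%:R *: xk - xp) + r)) iyk.
rewrite -eY (_ : yk + tau2 *: (K *m (2%:R *: xk - xp) + r) - yk = tau2 *: (w + z)) in P2; last first.
  rewrite addrAC subrr add0r; congr (_ *: _).
  by rewrite scaler_nat mulr2n /w /z !mulmxBr !mulmxDr zg.
rewrite vdotZl (vdotC (w + z)) (vdotDr w z) in P2.
set h := x1 - xk in P1 *; set e := y1 - yk in P2 *.
have Lx := Lhat_x c A b B d rho xk h y1 hQ.
rewrite (_ : xk + h = x1) in Lx; last by rewrite /h addrC subrK.
have Ly := Lhat_y Q c A b B d rho xk yk e.
rewrite (_ : yk + e = y1) in Ly; last by rewrite /e addrC subrK.
rewrite -/K -/r -/w in Ly.
set D := specnorm Q + rho.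
have hSD : specnorm Q <= D by rewrite /D lerDl.
have Q1 := quad_bound h hSD.
have Dpos : 0 < D.
  rewrite ltNge; apply/negP => hD0.
  have : 1 / (2%:R * (2%:R * D)) <= 0.
    by rewrite div1r invr_le0; nra.
  rewrite -/D in ht; lra.
have F4 : tau1 * (2%:R * (2%:R * D)) <= 1.
  by rewrite -ler_pdivlMr -/D; [| nra].
have W := vdot_sum_le (K *m xk) r; rewrite -/w in W.
have K1 := specnorm_sq K xk.
have K2 := specnorm_sq K (xk - xp); rewrite -/z in K2.
rewrite -/g in Lx.
clearbody w z h e g.
have S1 := vdot_ge0 ((2%:R * tau2) *: w - e).
have S2 := vdot_ge0 ((2%:R * tau2) *: z - e).
rewrite !(vdotDl, vdotDr, vdotNl, vdotNr, vdotZl, vdotZr) (vdotC w e) in S1.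
rewrite !(vdotDl, vdotDr, vdotNl, vdotNr, vdotZl, vdotZr) (vdotC z e) in S2.
rewrite -/K in hK.
have hh0 := vdot_ge0 h.
have xx0 := vdot_ge0 xk.
have dd0 := vdot_ge0 (xk - xp).
set i1 := tau1^-1; set i2 := tau2^-1.
have e1 : i1 * tau1 = 1 by rewrite mulVf // gt_eqF.
have e2 : i2 * tau2 = 1 by rewrite mulVf // gt_eqF.
have i1p : 0 <= i1 by rewrite invr_ge0 ltW.
have i2p : 0 <= i2 by rewrite invr_ge0 ltW.
set hh := vdot h h in P1 Q1 Lx hh0 *.
set gh := vdot g h in P1 Lx *.
set hQh := vdot h (Q *m h) in Q1 Lx *.
set ee := vdot e e in P2 S1 S2 *.
set p := vdot e w in P2 S1 Ly *.
set q := vdot e z in P2 S2 *.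
set SK2 := specnorm K ^+ 2 in K1 K2 hK *.
set ww := vdot w w in S1 W *.
set zz := vdot z z in S2 K2 *.
set kk := vdot (K *m xk) (K *m xk) in W K1 *.
set xx := vdot xk xk in K1 xx0 *.
set dx := vdot (xk - xp) (xk - xp) in K2 dd0 *.
set rr := vdot r r in W *.
set L0 := Lhat Q c A b B d rho xk yk in Ly *.
set Lm := Lhat Q c A b B d rho xk y1 in Lx Ly *.
set L1 := Lhat Q c A b B d rho x1 y1 in Lx *.
clearbody hh gh hQh ee p q SK2 ww zz kk xx dx rr L0 Lm L1 i1 i2 D.
have A1 : i1 * hh <= - gh.
  have := mulr_ge0 i1p (subr_ge0R P1).
  have E : i1 * (tau1 * gh) = gh by rewrite !mulrA e1 mul1r.
  lra.
have A2 : 4%:R * D <= i1.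
  have := mulr_ge0 i1p (subr_ge0R F4).
  have E : i1 * (tau1 * D) = D by rewrite !mulrA e1 mul1r.
  lra.
have A3 : 0 <= (i1 - 4%:R * D) * hh by apply: mulr_ge0 => //; lra.
have A4 : 0 <= rho * hh by apply: mulr_ge0.
have Xp : 3%:R * i1 * hh <= 4%:R * (Lm - L1) by lra.
have Y1 : ee + 4%:R * tau2 * p <= 8%:R * tau2 * tau2 * ww + 4%:R * tau2 * tau2 * zz by lra.
have Y2 : i2 * ee + 4%:R * p <= 8%:R * tau2 * ww + 4%:R * tau2 * zz.
  have := mulr_ge0 i2p (subr_ge0R Y1).
  have E1 : i2 * (tau2 * p) = p by rewrite !mulrA e2 mul1r.
  have E2 : i2 * (tau2 * (tau2 * ww)) = tau2 * ww by rewrite !mulrA e2 mul1r.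
  have E3 : i2 * (tau2 * (tau2 * zz)) = tau2 * zz by rewrite !mulrA e2 mul1r.
  lra.
have Y3 : tau2 * SK2 <= i1 / 2%:R.
  have := mulr_ge0 i1p (subr_ge0R hK).
  have E : i1 * (tau1 * (tau2 * SK2)) = tau2 * SK2 by rewrite !mulrA e1 mul1r.
  lra.
have Y4 := mulr_ge0 (ltW t2p) (subr_ge0R W).
have Y5 := mulr_ge0 (ltW t2p) (subr_ge0R K1).
have Y6 := mulr_ge0 (ltW t2p) (subr_ge0R K2).
have Y7 := mulr_ge0 (subr_ge0R Y3) xx0.
have Y8 := mulr_ge0 (subr_ge0R Y3) dd0.
lra.
Qed.


Lemma vdot0l (R : realType) n (u : 'cV[R]_n) : vdot 0 u = 0.
Proof. by rewrite /vdot big1 // => i _; rewrite mxE mul0r. Qed.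

Lemma iter_in (R : realType) (n m1 m2 : nat) (Q : 'M[R]_n) (c : 'cV[R]_n)
  (A : 'M[R]_(m1, n)) (b : 'cV[R]_m1) (B : 'M[R]_(m2, n)) (d : 'cV[R]_m2)
  (rho tau1 tau2 : R) (x0 : 'cV[R]_n) (y0 : 'cV[R]_(m1 + m2)) :
  in_box x0 -> in_Y y0 -> forall j,
  in_box (xit Q c A b B d rho tau1 tau2 x0 y0 j) /\ in_Y (yit Q c A b B d rho tau1 tau2 x0 y0 j).
Proof.
move=> hx0 hy0; case=> [|j]; first by split.
have /= [-> ->] := pdhg_rec Q c A b B d rho tau1 tau2 x0 y0 j.
by split; [exact: proj_box_in | exact: proj_Y_in].
Qed.

Lemma sum_ineq (R : realType) (n m1 m2 : nat) (Q : 'M[R]_n) (c : 'cV[R]_n)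
  (A : 'M[R]_(m1, n)) (b : 'cV[R]_m1) (B : 'M[R]_(m2, n)) (d : 'cV[R]_m2)
  (rho tau1 tau2 : R) (x0 : 'cV[R]_n) (y0 : 'cV[R]_(m1 + m2)) :
  Q^T = Q -> 0 <= rho -> 0 < tau1 -> 0 < tau2 ->
  tau1 * tau2 * specnorm (Kmat A B) ^+ 2 <= 1 / 2%:R ->
  tau1 <= 1 / (2%:R * (2%:R * (specnorm Q + rho))) ->
  in_box x0 -> in_Y y0 ->
  forall N : nat,
  tau1^-1 * \sum_(1 <= k < N.+1)
     vdot (xit Q c A b B d rho tau1 tau2 x0 y0 k - xit Q c A b B d rho tau1 tau2 x0 y0 k.-1)
          (xit Q c A b B d rho tau1 tau2 x0 y0 k - xit Q c A b B d rho tau1 tau2 x0 y0 k.-1)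
  + tau2^-1 * \sum_(1 <= k < N.+1)
     vdot (yit Q c A b B d rho tau1 tau2 x0 y0 k - yit Q c A b B d rho tau1 tau2 x0 y0 k.-1)
          (yit Q c A b B d rho tau1 tau2 x0 y0 k - yit Q c A b B d rho tau1 tau2 x0 y0 k.-1)
  <= 4%:R * (Lhat Q c A b B d rho x0 y0 -
             Lhat Q c A b B d rho (xit Q c A b B d rho tau1 tau2 x0 y0 N)
                                  (yit Q c A b B d rho tau1 tau2 x0 y0 N))
     + 8%:R * tau1^-1 * \sum_(1 <= k < N.+1)
         vdot (xit Q c A b B d rho tau1 tau2 x0 y0 k.-1) (xit Q c A b B d rho tau1 tau2 x0 y0 k.-1)
     + 16%:R * tau2 * vdot (rvec b d) (rvec b d) * N%:R
     - 2%:R * tau1^-1 *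
       vdot (xit Q c A b B d rho tau1 tau2 x0 y0 N - xit Q c A b B d rho tau1 tau2 x0 y0 N.-1)
            (xit Q c A b B d rho tau1 tau2 x0 y0 N - xit Q c A b B d rho tau1 tau2 x0 y0 N.-1).
Proof.
move=> hQ hrho t1p t2p hK ht hx0 hy0.
elim=> [|N IH].
  have ex : xit Q c A b B d rho tau1 tau2 x0 y0 0 = x0 by [].
  have ey : yit Q c A b B d rho tau1 tau2 x0 y0 0 = y0 by [].
  have e0 : vdot (x0 - x0) (x0 - x0) = 0 by rewrite subrr vdot0l.
  rewrite !big_geq //= ex ey e0.
  lra.
have St := step_ineq c b d hQ hrho t1p t2p hK ht hx0 hy0 N.
cbv zeta beta in St.
rewrite !(big_nat_recr N.+1) //=.
have eN : (N.+1)%:R = N%:R + 1 :> R by rewrite natr1.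
lra.
Qed.

Unset Implicit Arguments.

Theorem mainTheorem3 (R : realType) (n m1 m2 : nat) (Q : 'M[R]_n) (c : 'cV[R]_n)
  (A : 'M[R]_(m1, n)) (b : 'cV[R]_m1) (B : 'M[R]_(m2, n)) (d : 'cV[R]_m2)
  (rho tau1 tau2 : R) (x0 : 'cV[R]_n) (y0 : 'cV[R]_(m1 + m2)) :
  (0 < n)%N -> (0 < m1)%N -> (0 < m2)%N ->
  Q^T = Q -> 0 <= rho -> 0 < tau1 -> 0 < tau2 ->
  tau1 * tau2 * specnorm (Kmat A B) ^+ 2 <= 1 / 2%:R ->
  tau1 <= 1 / (2%:R * (2%:R * (specnorm Q + rho))) ->
  in_box x0 -> in_Y y0 ->
  forall N : nat, (1 <= N)%N ->
  let x := xit Q c A b B d rho tau1 tau2 x0 y0 in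
  let y := yit Q c A b B d rho tau1 tau2 x0 y0 in
  let Phi := Phi Q c A b B d rho in
  ((1 / tau1 * \sum_(1 <= k < N.+1) vnorm (x k - x k.-1) ^+ 2
    + 1 / tau2 * \sum_(1 <= k < N.+1) vnorm (y k - y k.-1) ^+ 2)%:E
   <= 4%:R%:E * (Phi x0 y0 - Phi (x N) (y N))
      + (8%:R / tau1 * \sum_(1 <= k < N.+1) vnorm (x k.-1) ^+ 2
         + 16%:R * tau2 * vnorm (rvec b d) ^+ 2 * N%:R)%:E)%E.
Proof.
move=> _ _ _ hQ hrho t1p t2p hK ht hx0 hy0 N _; cbv zeta.
have [iX iY] := iter_in Q c A b B d rho tau1 tau2 hx0 hy0 N.
have HS := sum_ineq c b d hQ hrho t1p t2p hK ht hx0 hy0 N.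
rewrite /Phi /h1 /h2 (asboolT hx0) (asboolT hy0) (asboolT iX) (asboolT iY) /=.
rewrite !adde0 !sube0 -EFinB -EFinM -EFinD lee_fin.
have v2 : forall k (u : 'cV[R]_k), vnorm u ^+ 2 = vdot u u.
  by move=> k u; apply: vnorm2.
under eq_bigr do rewrite v2.
under [X in 1 / tau2 * X]eq_bigr do rewrite v2.
under [X in 8%:R / tau1 * X]eq_bigr do rewrite v2.
rewrite v2.
have := vdot_ge0 (xit Q c A b B d rho tau1 tau2 x0 y0 N - xit Q c A b B d rho tau1 tau2 x0 y0 N.-1).
rewrite !div1r.
move: HS.
set X := xit Q c A b B d rho tau1 tau2 x0 y0.
set Y := yit Q c A b B d rho tau1 tau2 x0 y0.
set s1 := \sum_(1 <= i < N.+1) vdot (X i - X i.-1) (X i - X i.-1).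
set s2 := \sum_(1 <= i < N.+1) vdot (Y i - Y i.-1) (Y i - Y i.-1).
set s3 := \sum_(1 <= i < N.+1) vdot (X i.-1) (X i.-1).
move=> HS H0.
have H1 : 0 <= tau1^-1 * vdot (X N - X N.-1) (X N - X N.-1).
  by apply: mulr_ge0 => //; rewrite invr_ge0 ltW.
lra.
Qed.
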